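(* Let $V$ be a real Hilbert space, $\mathcal D$ a dictionary, $V_n\subset V$ any subspace of dimension $n$ with orthonormal basis $(\phi_1,\dots,\phi_n)$, and $\kappa\in(0,1)$. If $(W_m)_{m\ge0}$ is generated by the worst case OMP algorithm with parameter $\kappa$, then $\lim_{m\to\infty}r_m=0$.
   Context: A dictionary is a set $\mathcal D\subset V$ of elements with $\|\omega\|=1$ for all $\omega\in\mathcal D$ whose finite linear combinations are dense in $V$. Worst case OMP: $W_0=\{0\}$; for $k\ge1$, take $v_k\in\operatorname{argmax}\{\|v-P_{W_{k-1}}v\|: v\in V_n,\ \|v\|=1\}$, then choose $\omega_k\in\mathcal D$ with $|\langle v_k-P_{W_{k-1}}v_k,\omega_k\rangle|\ge\kappa\sup_{\omega\in\mathcal D}|\langle v_k-P_{W_{k-1}}v_k,\omega\rangle|$, and set $W_k=\operatorname{span}\{\omega_1,\dots,\omega_k\}$ ($P_X$ is the orthogonal projection onto $X$). The residual is $r_m=\sum_{i=1}^n\|\phi_i-P_{W_m}\phi_i\|^2$. *)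

(* Defs.v *)
From HB Require Import structures.
From mathcomp Require Import all_boot all_order all_algebra.
From mathcomp Require Import all_classical all_reals all_analysis.
Set Implicit Arguments. Unset Strict Implicit. Unset Printing Implicit Defensive.
Import Order.TTheory GRing.Theory Num.Theory.
Import numFieldNormedType.Exports.
Local Open Scope classical_set_scope.
Local Open Scope ring_scope.

(* A real inner product compatible with the norm of V:
   symmetric, linear in the first argument, and ||x||^2 = <x,x>.
   Together with completeness of V this makes V a real Hilbert space. *)
Definition is_inner_product {R : realType} {V : normedModType R}
  (inner : V -> V -> R) : Prop :=
  [/\ (forall x y, inner x y = inner y x),
      (forall (a : R) x y z, inner (a *: x + y) z = a * inner x z + inner y z)
    & (forall x, `|x| ^+ 2 = inner x x)].

Definition lin_span {R : realType} {V : normedModType R} (S : set V) : set V :=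
  [set v | exists (m : nat) (c : 'I_m -> R) (s : 'I_m -> V),
     (forall i, S (s i)) /\ v = \sum_(i < m) c i *: s i].

Definition is_dictionary {R : realType} {V : normedModType R} (D : set V) : Prop :=
  (forall w, D w -> `|w| = 1) /\ closure (lin_span D) = setT.

Definition is_orth_proj {R : realType} {V : normedModType R}
  (inner : V -> V -> R) (W : set V) (x p : V) : Prop :=
  W p /\ (forall w, W w -> inner (x - p) w = 0).

(* The orthogonal projection P_W x (chosen classically; it exists and is
   unique for the finite-dimensional subspaces used below). *)
Definition orth_proj {R : realType} {V : normedModType R}
  (inner : V -> V -> R) (W : set V) (x : V) : V :=
  xget 0 [set p | is_orth_proj inner W x p].

Definition OMP_space {R : realType} {V : normedModType R}
  (omega : nat -> V) (k : nat) : set V :=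
  lin_span [set omega i | i in [set i : nat | (1 <= i <= k)%N]].

(* (v_k)_{k>=1}, (omega_k)_{k>=1} are generated by worst case OMP with parameter
   kappa on the subspace Vn (values at index 0 are irrelevant). *)
Definition worst_case_OMP {R : realType} {V : normedModType R}
  (inner : V -> V -> R) (D : set V) (Vn : set V) (kappa : R)
  (v omega : nat -> V) : Prop :=
  forall k : nat, (1 <= k)%N ->
    let P := orth_proj inner (OMP_space omega k.-1) in
    [/\ Vn (v k), `|v k| = 1,
        (forall u, Vn u -> `|u| = 1 -> `|u - P u| <= `|v k - P (v k)|),
        D (omega k)
      & kappa * sup [set `|inner (v k - P (v k)) w| | w in D]
          <= `|inner (v k - P (v k)) (omega k)| ].

Definition OMP_residual {R : realType} {V : normedModType R}
  (inner : V -> V -> R) (n : nat) (phi : 'I_n -> V) (omega : nat -> V) (m : nat) : R :=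
  \sum_(i < n) `|phi i - orth_proj inner (OMP_space omega m) (phi i)| ^+ 2.

(* Main.v *)
Require Import Defs.
From HB Require Import structures.
From mathcomp Require Import all_boot all_order all_algebra.
From mathcomp Require Import all_classical all_reals all_analysis.
From mathcomp Require Import ring lra.
Import Order.TTheory GRing.Theory Num.Theory.
Import numFieldNormedType.Exports.
Local Open Scope classical_set_scope.
Local Open Scope ring_scope.

Lemma ipS {R : realType} {V : normedModType R} {inner : V -> V -> R} :
  is_inner_product inner -> forall x y, inner x y = inner y x.
Proof. by case. Qed.

Lemma ip0l {R : realType} {V : normedModType R} {inner : V -> V -> R} :
  is_inner_product inner -> forall z, inner 0 z = 0.
Proof.
case=> _ L _ z; have := L 1 0 0 z.
rewrite scaler0 addr0 mul1r => h; lra.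
Qed.

Lemma ipDl {R : realType} {V : normedModType R} {inner : V -> V -> R} :
  is_inner_product inner -> forall x y z, inner (x + y) z = inner x z + inner y z.
Proof. by case=> _ L _ x y z; have := L 1 x y z; rewrite scale1r mul1r. Qed.

Lemma ipZl {R : realType} {V : normedModType R} {inner : V -> V -> R} :
  is_inner_product inner -> forall a x z, inner (a *: x) z = a * inner x z.
Proof.
move=> H a x z; case: (H) => _ L _; have := L a x 0 z.
by rewrite addr0 (ip0l H) addr0.
Qed.

Lemma ipNl {R : realType} {V : normedModType R} {inner : V -> V -> R} :
  is_inner_product inner -> forall x z, inner (- x) z = - inner x z.
Proof. by move=> H x z; rewrite -scaleN1r (ipZl H) mulN1r. Qed.

Lemma ipBl {R : realType} {V : normedModType R} {inner : V -> V -> R} :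
  is_inner_product inner -> forall x y z, inner (x - y) z = inner x z - inner y z.
Proof. by move=> H x y z; rewrite (ipDl H) (ipNl H). Qed.

Lemma ip0r {R : realType} {V : normedModType R} {inner : V -> V -> R} :
  is_inner_product inner -> forall z, inner z 0 = 0.
Proof. by move=> H z; rewrite (ipS H) (ip0l H). Qed.
Lemma ipDr {R : realType} {V : normedModType R} {inner : V -> V -> R} :
  is_inner_product inner -> forall x y z, inner z (x + y) = inner z x + inner z y.
Proof. by move=> H x y z; rewrite !(ipS H z) (ipDl H). Qed.
Lemma ipZr {R : realType} {V : normedModType R} {inner : V -> V -> R} :
  is_inner_product inner -> forall a x z, inner z (a *: x) = a * inner z x.
Proof. by move=> H a x z; rewrite !(ipS H z) (ipZl H). Qed.
Lemma ipBr {R : realType} {V : normedModType R} {inner : V -> V -> R} :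
  is_inner_product inner -> forall x y z, inner z (x - y) = inner z x - inner z y.
Proof. by move=> H x y z; rewrite !(ipS H z) (ipBl H). Qed.

Lemma ipN {R : realType} {V : normedModType R} {inner : V -> V -> R} :
  is_inner_product inner -> forall x, `|x| ^+ 2 = inner x x.
Proof. by case. Qed.

Lemma ip_sum {R : realType} {V : normedModType R} {inner : V -> V -> R} :
  is_inner_product inner -> forall m (c : 'I_m -> R) (s : 'I_m -> V) z,
  inner (\sum_(i < m) c i *: s i) z = \sum_(i < m) c i * inner (s i) z.
Proof.
move=> H m c s z; elim/big_rec2: _ => [|i y1 y2 _ <-]; first exact: ip0l.
by rewrite (ipDl H) (ipZl H).
Qed.

Lemma ip_CS2 {R : realType} {V : normedModType R} {inner : V -> V -> R} :
  is_inner_product inner -> forall x y, inner x y ^+ 2 <= `|x| ^+ 2 * `|y| ^+ 2.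
Proof.
move=> H x y.
have [y0|yn0] := eqVneq y 0.
  by rewrite y0 (ip0r H) expr0n /= mulr_ge0 // exprn_ge0.
have Y : 0 < `|y| ^+ 2 by rewrite exprn_gt0 // normr_gt0.
set t := inner x y / `|y| ^+ 2.
have := ipN H (x - t *: y).
rewrite (ipBl H) !(ipBr H) !(ipZl H) !(ipZr H) -!(ipN H) (ipS H y x) => E.
have : 0 <= `|x - t *: y| ^+ 2 by rewrite exprn_ge0.
rewrite E /t => h.
move: h Y; set a := inner x y; set b := `|y| ^+ 2; set c := `|x| ^+ 2 => h Y.
have e1 : c - a / b * a - (a / b * a - a / b * (a / b * b)) = c - a ^+ 2 / b.
  by field; rewrite gt_eqF.
rewrite e1 in h.
rewrite -subr_ge0.
have -> : c * b - a ^+ 2 = (c - a ^+ 2 / b) * b by field; rewrite gt_eqF.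
by rewrite mulr_ge0 // ltW.
Qed.

Lemma ip_CS {R : realType} {V : normedModType R} {inner : V -> V -> R} :
  is_inner_product inner -> forall x y, `|inner x y| <= `|x| * `|y|.
Proof.
move=> H x y; rewrite -ler_sqr ?nnegrE ?mulr_ge0 // ?exprMn real_normK ?num_real //.
exact: ip_CS2.
Qed.

Lemma ls_ind {R : realType} {V : normedModType R} (S T : set V) :
  T 0 -> (forall x s c, T x -> S s -> T (x + c *: s)) -> lin_span S `<=` T.
Proof.
move=> T0 TS w [m [c [s [Hs ->]]]].
elim: m c s Hs => [|m IH] c s Hs; first by rewrite big_ord0.
rewrite big_ord_recl addrC; apply: TS => //; exact: IH.
Qed.

Lemma ls_ext {R : realType} {V : normedModType R} (S : set V) y s c :
  lin_span S y -> S s -> lin_span S (y + c *: s).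
Proof.
move=> [m [c0 [s0 [Hs ->]]]] Ss.
exists m.+1, (fun i => if unlift ord0 i is Some j then c0 j else c),
  (fun i => if unlift ord0 i is Some j then s0 j else s); split.
  by move=> i; case: (unlift ord0 i).
rewrite big_ord_recl unlift_none addrC; congr (_ + _).
by apply: eq_bigr => i _; rewrite liftK.
Qed.

Lemma ls0 {R : realType} {V : normedModType R} (S : set V) : lin_span S 0.
Proof. by exists 0%N, (fun=> 0), (fun=> 0); split; [by case | rewrite big_ord0]. Qed.

Lemma ls_sub {R : realType} {V : normedModType R} (S : set V) : S `<=` lin_span S.
Proof. by move=> s Ss; rewrite -[s]add0r -[s]scale1r; apply: ls_ext => //; exact: ls0. Qed.

Lemma ls_add {R : realType} {V : normedModType R} (S : set V) a x y :
  lin_span S x -> lin_span S y -> lin_span S (a *: x + y).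
Proof.
move=> Hx; move: x Hx y.
apply: (ls_ind S (fun x => forall y, lin_span S y -> lin_span S (a *: x + y))).
  by move=> y Hy; rewrite scaler0 add0r.
move=> x s c IH Ss y Hy.
have -> : a *: (x + c *: s) + y = a *: x + (y + (a * c) *: s).
  by rewrite scalerDr scalerA -addrA [_ + y]addrC.
exact: (IH _ (ls_ext _ _ _ _ Hy Ss)).
Qed.

Lemma ls_sub2 {R : realType} {V : normedModType R} (S : set V) x y :
  lin_span S x -> lin_span S y -> lin_span S (x - y).
Proof.
move=> Hx Hy; rewrite -[x]scale1r -[y]scale1r -scaleNr addrC.
apply: ls_add => //; rewrite -[1 *: x]addr0; apply: ls_add => //; exact: ls0.
Qed.

Lemma ls_mono {R : realType} {V : normedModType R} (S T : set V) :
  S `<=` T -> lin_span S `<=` lin_span T.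
Proof. by move=> ST w [m [c [s [Hs ->]]]]; exists m, c, s; split => // i; apply: ST. Qed.

Lemma ls_orth {R : realType} {V : normedModType R} {inner : V -> V -> R} (S : set V) z :
  is_inner_product inner -> (forall s, S s -> inner s z = 0) ->
  forall w, lin_span S w -> inner w z = 0.
Proof.
move=> H HS; apply: ls_ind => [|x s c Hx Ss] /=; first exact: ip0l.
by rewrite (ipDl H) (ipZl H) Hx HS // mulr0 addr0.
Qed.

Lemma W_mono {R : realType} {V : normedModType R} (omega : nat -> V) k :
  OMP_space omega k `<=` OMP_space omega k.+1.
Proof.
apply: ls_mono => _ [i /andP[h1 h2] <-]; exists i => //.
by rewrite /= h1 /= (leq_trans h2).
Qed.

Lemma W_om {R : realType} {V : normedModType R} (omega : nat -> V) k :
  OMP_space omega k.+1 (omega k.+1).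
Proof. by apply: ls_sub; exists k.+1 => //=; rewrite leqnn. Qed.

Lemma W_gen {R : realType} {V : normedModType R} (omega : nat -> V) k s :
  [set omega i | i in [set i : nat | (1 <= i <= k.+1)%N]] s ->
  s = omega k.+1 \/ OMP_space omega k s.
Proof.
move=> [i /andP[h1 h2] <-].
have [->|ne] := eqVneq i k.+1; first by left.
right; apply: ls_sub; exists i => //=; rewrite h1 /=.
by rewrite -ltnS ltn_neqAle ne h2.
Qed.

Lemma proj_ex {R : realType} {V : normedModType R} {inner : V -> V -> R}
  (omega : nat -> V) k :
  is_inner_product inner ->
  forall x, exists p, is_orth_proj inner (OMP_space omega k) x p.
Proof.
move=> H; elim: k => [|k IH] x.
  exists 0; split; first exact: ls0.
  move=> w Hw; rewrite (ipS H); apply: (ls_orth _ _ H _ _ Hw).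
  by move=> s [i /andP[h1 h2] _]; move: (leq_trans h1 h2).
have [px [Wpx Opx]] := IH x.
have [pw [Wpw Opw]] := IH (omega k.+1).
set u := omega k.+1 - pw.
have Ou : forall w, OMP_space omega k w -> inner u w = 0 by exact: Opw.
set c := inner (x - px) u / inner u u.
exists (px + c *: u); split.
  rewrite addrC; apply: ls_add; first exact: ls_sub2 _ _ _ (W_om _ _) (W_mono _ _ _ Wpw).
  exact: W_mono.
move=> w Hw; rewrite (ipS H); apply: (ls_orth _ _ H _ _ Hw); move=> s /W_gen [Es|Ws];
  rewrite ?Es (ipS H) opprD addrA (ipBl H) (ipZl H).
  have e1 : inner (x - px) (omega k.+1) = inner (x - px) u.
    by rewrite /u (ipBr H) (Opx pw Wpw) subr0.
  have e2 : inner u u = inner u (omega k.+1).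
    by rewrite {2}/u (ipBr H) (Ou pw Wpw) subr0.
  rewrite e1 -e2.
  have [b0|bn0] := eqVneq (inner u u) 0.
    have : `|u| ^+ 2 = 0 by rewrite (ipN H).
    move/eqP; rewrite expf_eq0 /= normr_eq0 => /eqP ->.
    by rewrite (ip0r H) (ip0l H) !mulr0 subr0.
  by rewrite /c divfK // subrr.
by rewrite Opx // Ou // mulr0 subr0.
Qed.

Lemma projP {R : realType} {V : normedModType R} {inner : V -> V -> R}
  (omega : nat -> V) k x :
  is_inner_product inner ->
  is_orth_proj inner (OMP_space omega k) x (orth_proj inner (OMP_space omega k) x).
Proof. by move=> H; apply: xgetPex; apply: proj_ex. Qed.

Lemma pyth {R : realType} {V : normedModType R} {inner : V -> V -> R} {a b : V} :
  is_inner_product inner -> inner a b = 0 ->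
  `|a + b| ^+ 2 = `|a| ^+ 2 + `|b| ^+ 2.
Proof.
move=> H ab; rewrite !(ipN H) (ipDl H) !(ipDr H) ab (ipS H b a) ab.
by rewrite addr0 add0r.
Qed.

Lemma proj_pyth {R : realType} {V : normedModType R} {inner : V -> V -> R}
  (omega : nat -> V) k x :
  is_inner_product inner ->
  let p := orth_proj inner (OMP_space omega k) x in
  `|x| ^+ 2 = `|x - p| ^+ 2 + `|p| ^+ 2.
Proof.
move=> H p; have [Wp Op] := projP omega k x H.
by rewrite -(pyth H) ?subrK //; apply: Op.
Qed.

Lemma g_id {R : realType} {V : normedModType R} {inner : V -> V -> R}
  (omega : nat -> V) k y w :
  is_inner_product inner ->
  let P := orth_proj inner (OMP_space omega k) in
  inner (y - P y) w = inner y (w - P w).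
Proof.
move=> H P.
have [Wy Oy] := projP omega k y H; have [Ww Ow] := projP omega k w H.
have a1 := Ow _ Wy; have a2 := Oy _ Ww.
rewrite /P !(ipBl H) !(ipBr H) in a1 a2 *.
rewrite (ipS H w) (ipS H (orth_proj _ _ w)) in a1.
lra.
Qed.

Lemma d_decr {R : realType} {V : normedModType R} {inner : V -> V -> R}
  (omega : nat -> V) k x :
  is_inner_product inner -> `|omega k.+1| = 1 ->
  `|x - orth_proj inner (OMP_space omega k.+1) x| ^+ 2 +
    (inner (x - orth_proj inner (OMP_space omega k) x) (omega k.+1)) ^+ 2
  <= `|x - orth_proj inner (OMP_space omega k) x| ^+ 2.
Proof.
move=> H nw.
set p0 := orth_proj _ (OMP_space omega k) x; set p1 := orth_proj _ (OMP_space omega k.+1) x.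
have [W0 O0] := projP omega k x H; have [W1 O1] := projP omega k.+1 x H.
rewrite -/p0 in W0 O0; rewrite -/p1 in W1 O1.
set q := p1 - p0.
have Wq : OMP_space omega k.+1 q by apply: ls_sub2 => //; apply: W_mono.
have E : x - p0 = (x - p1) + q by rewrite /q addrA subrK.
set pw := orth_proj inner (OMP_space omega k) (omega k.+1).
have [Wpw Opw] := projP omega k (omega k.+1) H; rewrite -/pw in Wpw Opw.
set u := omega k.+1 - pw.
have Wu : OMP_space omega k.+1 u by apply: ls_sub2; [apply: W_om | apply: W_mono].
have nu : `|u| ^+ 2 <= 1.
  have := proj_pyth omega k (omega k.+1) H; rewrite -/pw -/u nw expr1n => ->.
  by rewrite lerDl exprn_ge0.
have e1 : inner (x - p0) (omega k.+1) = inner q u.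
  rewrite /p0 (g_id omega k x (omega k.+1) H) -/pw -/u -/p0.
  rewrite -(subrK p0 x) (ipDl H) E.
  have -> : inner p0 u = 0 by rewrite (ipS H); apply: Opw.
  by rewrite addr0 (ipDl H) (O1 _ Wu) add0r.
rewrite e1 E (pyth H (O1 _ Wq)) lerD2l.
have := ip_CS2 H q u => h; apply: (le_trans h).
by rewrite ler_piMr ?exprn_ge0.
Qed.

Lemma coefE {R : realType} {V : normedModType R} {inner : V -> V -> R}
  n (phi : 'I_n -> V) (a : 'I_n -> R) j :
  is_inner_product inner ->
  (forall i j : 'I_n, inner (phi i) (phi j) = (i == j)%:R) ->
  inner (\sum_(i < n) a i *: phi i) (phi j) = a j.
Proof.
move=> H Hon; rewrite (ip_sum H) (bigD1 j) //= Hon eqxx mulr1 big1 ?addr0 //.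
by move=> i /negbTE ne; rewrite Hon ne mulr0.
Qed.

Lemma span_ex {R : realType} {V : normedModType R}
  n (phi : 'I_n -> V) v :
  lin_span [set phi i | i in setT] v ->
  exists a : 'I_n -> R, v = \sum_(i < n) a i *: phi i.
Proof.
move: v; apply: ls_ind.
  by exists (fun=> 0); rewrite big1 // => i _; rewrite scale0r.
move=> x s c [a ->] [j _ <-].
exists (fun i => a i + c * (i == j)%:R).
under [RHS]eq_bigr do rewrite scalerDl.
rewrite big_split /=; congr (_ + _).
rewrite (bigD1 j) //= eqxx mulr1 big1 ?addr0 //.
by move=> i /negbTE ->; rewrite mulr0 scale0r.
Qed.

Lemma span_coef {R : realType} {V : normedModType R} {inner : V -> V -> R}
  n (phi : 'I_n -> V) v :
  is_inner_product inner ->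
  (forall i j : 'I_n, inner (phi i) (phi j) = (i == j)%:R) ->
  lin_span [set phi i | i in setT] v ->
  v = \sum_(i < n) inner v (phi i) *: phi i.
Proof.
move=> H Hon /span_ex [a ->]; apply: eq_bigr => i _.
by rewrite (coefE _ _ _ _ H Hon).
Qed.

Lemma phi_norm {R : realType} {V : normedModType R} {inner : V -> V -> R}
  n (phi : 'I_n -> V) i :
  is_inner_product inner ->
  (forall i j : 'I_n, inner (phi i) (phi j) = (i == j)%:R) ->
  `|phi i| = 1.
Proof.
move=> H Hon; apply/eqP; rewrite -sqrp_eq1 // (ipN H) Hon eqxx //.
Qed.

Lemma unit_bessel {R : realType} {V : normedModType R} {inner : V -> V -> R}
  n (phi : 'I_n -> V) v u :
  is_inner_product inner ->
  (forall i j : 'I_n, inner (phi i) (phi j) = (i == j)%:R) ->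
  lin_span [set phi i | i in setT] v -> `|v| = 1 ->
  inner v u ^+ 2 <= \sum_(i < n) inner (phi i) u ^+ 2.
Proof.
move=> H Hon Hv nv.
set y := \sum_(i < n) inner (phi i) u *: phi i.
have e1 : inner v u = inner v y.
  rewrite {1}(span_coef _ _ _ H Hon Hv) (ip_sum H) (ipS H v) (ip_sum H).
  by apply: eq_bigr => i _; rewrite (ipS H v) mulrC.
have e2 : `|y| ^+ 2 = \sum_(i < n) inner (phi i) u ^+ 2.
  rewrite (ipN H) {1}/y (ip_sum H); apply: eq_bigr => i _.
  by rewrite (ipS H (phi i) y) /y (coefE _ _ _ _ H Hon) expr2.
rewrite e1 -e2; apply: le_trans (ip_CS2 H v y) _.
by rewrite nv expr1n mul1r.
Qed.

Lemma unit_dual {R : realType} {V : normedModType R} {inner : V -> V -> R}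
  n (phi : 'I_n -> V) v g :
  is_inner_product inner ->
  (forall i j : 'I_n, inner (phi i) (phi j) = (i == j)%:R) ->
  lin_span [set phi i | i in setT] v -> `|v| = 1 ->
  `|inner g v| <= \sum_(i < n) `|inner g (phi i)|.
Proof.
move=> H Hon Hv nv.
rewrite (ipS H) {1}(span_coef _ _ _ H Hon Hv) (ip_sum H).
apply: le_trans (ler_norm_sum _ _ _) _; apply: ler_sum => i _.
rewrite normrM (ipS H g); apply: ler_piMl => //.
apply: le_trans (ip_CS H v (phi i)) _.
by rewrite nv (phi_norm _ _ _ H Hon) mul1r.
Qed.

Definition ev (P : nat -> Prop) := exists N, forall k, (N <= k)%N -> P k.

Lemma ev_and (P Q : nat -> Prop) : ev P -> ev Q -> ev (fun k => P k /\ Q k).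
Proof.
move=> [N1 h1] [N2 h2]; exists (maxn N1 N2) => k; rewrite geq_max => /andP[a b].
by split; [apply: h1|apply: h2].
Qed.

Lemma ev_all n (P : 'I_n -> nat -> Prop) :
  (forall i, ev (P i)) -> ev (fun k => forall i, P i k).
Proof.
move=> h; have [f hf] := choice h.
exists (\max_(j < n) f j)%N => k hk i; apply: hf.
exact: (leq_trans (leq_bigmax (F:=f) i) hk).
Qed.

Theorem mainTheorem13 (R : realType) (V : completeNormedModType R)
  (inner : V -> V -> R) (D : set V) (n : nat) (phi : 'I_n -> V) (kappa : R)
  (v omega : nat -> V) :
  is_inner_product inner ->
  is_dictionary D ->
  (forall i j : 'I_n, inner (phi i) (phi j) = (i == j)%:R) ->
  0 < kappa < 1 ->
  worst_case_OMP inner D (lin_span [set phi i | i in setT]) kappa v omega ->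
  OMP_residual inner phi omega @ \oo --> 0.
Proof.
move=> H [Dn Dd] Hon /andP[k0 k1] Homp.
pose P k x := orth_proj inner (OMP_space omega k) x.
pose r := OMP_residual inner phi omega.
pose g k := v k.+1 - P k (v k.+1).
pose Vn := lin_span [set phi i | i in setT].
have HO : forall k, [/\ Vn (v k.+1), `|v k.+1| = 1,
    (forall u, Vn u -> `|u| = 1 -> `|u - P k u| <= `|g k|), D (omega k.+1)
  & kappa * sup [set `|inner (g k) w| | w in D] <= `|inner (g k) (omega k.+1)|].
  by move=> k; exact: (Homp k.+1 isT).
have nom : forall k, `|omega k.+1| = 1.
  by move=> k; have [_ _ _ Dw _] := HO k; exact: Dn.
have ng : forall k, `|g k| <= 1.
  move=> k; have [_ nv _ _ _] := HO k.
  have := proj_pyth omega k (v k.+1) H; rewrite nv expr1n -/(P k (v k.+1)) -/(g k).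
  move=> e; rewrite -(ler_sqr) ?nnegrE // expr1n e lerDl exprn_ge0 //.
have r0 : forall k, 0 <= r k.
  by move=> k; apply: sumr_ge0 => i _; apply: exprn_ge0.
have rdec : forall k, r k.+1 + inner (g k) (omega k.+1) ^+ 2 <= r k.
  move=> k; have [Vv nv _ _ _] := HO k.
  have s1 : r k.+1 + \sum_(i < n)
      inner (phi i - P k (phi i)) (omega k.+1) ^+ 2 <= r k.
    rewrite /r /OMP_residual -big_split; apply: ler_sum => i _.
    exact: d_decr.
  apply: le_trans s1; rewrite lerD2l /g /P (g_id omega k _ _ H).
  under eq_bigr do rewrite (g_id omega k _ _ H).
  exact: unit_bessel.
have rmono : forall N d, r (d + N)%N <= r N.
  move=> N; elim=> [|d IH] //; apply: le_trans IH.
  apply: le_trans (rdec _); rewrite lerDl; exact: sqr_ge0.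
have st3 : forall d : R, 0 < d -> ev (fun k => `|inner (g k) (omega k.+1)| < d).
  move=> d d0.
  pose S := [set - r k | k in [set: nat]].
  have hS : has_sup S.
    split; first by exists (- r 0%N), 0%N.
    exists 0 => _ [k _ <-]; rewrite oppr_le0; exact: r0.
  have [_ [N _ <-] hN] := sup_adherent (mulr_gt0 d0 d0) hS.
  exists N => k Nk.
  have a1 : r k <= r N by rewrite -(subnK Nk); apply: rmono.
  have a2 : - r k.+1 <= sup S by apply: sup_upper_bound => //; exists k.+1.
  have a3 := rdec k.
  rewrite -(ltr_sqr) ?nnegrE ?(ltW d0) // real_normK ?num_real // expr2.
  lra.
have st4 : forall d : R, 0 < d ->
    ev (fun k => forall w, D w -> `|inner (g k) w| < d).
  move=> d d0; have [N hN] := st3 _ (mulr_gt0 k0 d0).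
  exists N => k Nk w Dw; have [_ _ _ Dom hs] := HO k.
  have hS : has_sup [set `|inner (g k) w| | w in D].
    split; first by exists (`|inner (g k) (omega k.+1)|), (omega k.+1).
    exists 1 => _ [w' Dw' <-]; apply: le_trans (ip_CS H _ _) _.
    by rewrite (Dn _ Dw') mulr1 ng.
  have b1 : `|inner (g k) w| <= sup [set `|inner (g k) w| | w in D].
    by apply: sup_upper_bound => //; exists w.
  have b2 := hN k Nk.
  rewrite -(ltr_pM2l k0); apply: le_lt_trans b2.
  by apply: le_trans hs; rewrite ler_pM2l.
have st5 : forall y, lin_span D y ->
    forall d : R, 0 < d -> ev (fun k => `|inner (g k) y| < d).
  apply: ls_ind.
    by move=> d d0; exists 0%N => k _; rewrite (ip0r H) normr0.
  move=> x s c Tx Ds d d0.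
  pose e := d / 2 / (`|c| + 1).
  have e0 : 0 < e by rewrite /e !divr_gt0 // ltr_wpDl.
  have he : e * (`|c| + 1) = d / 2 by rewrite /e divfK // gt_eqF // ltr_wpDl.
  have [N hN] := ev_and _ _ (Tx (d / 2) (divr_gt0 d0 (ltr0Sn _ 1))) (st4 e e0).
  exists N => k Nk; have [a1 a2] := hN k Nk; have a3 := a2 s Ds.
  rewrite (ipDr H) (ipZr H).
  apply: le_lt_trans (ler_normD _ _) _; rewrite normrM.
  have hc : 0 <= `|c| by [].
  have hb : 0 <= `|inner (g k) s| by [].
  nra.
have st6 : forall i (d : R), 0 < d -> ev (fun k => `|inner (g k) (phi i)| < d).
  move=> i d d0.
  have cl : closure (lin_span D) (phi i) by rewrite Dd.
  have [y [Ly By]] := cl _ (nbhsx_ballx (phi i) (d / 2) (divr_gt0 d0 (ltr0Sn _ 1))).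
  move: By; rewrite -ball_normE /= => By.
  have [N hN] := st5 y Ly (d / 2) (divr_gt0 d0 (ltr0Sn _ 1)).
  exists N => k Nk; have a1 := hN k Nk.
  have e : inner (g k) (phi i) = inner (g k) y + inner (g k) (phi i - y).
    by rewrite (ipBr H) addrC subrK.
  rewrite e; apply: le_lt_trans (ler_normD _ _) _.
  have a2 : `|inner (g k) (phi i - y)| <= `|phi i - y|.
    apply: le_trans (ip_CS H _ _) _; rewrite ler_piMl //.
  lra.
apply/cvgr0Pnorm_lt => eps eps0.
pose m := (n * n)%N.
pose d := eps / (m.+1)%:R.
have d0 : 0 < d by rewrite /d divr_gt0.
have hd : d * (m%:R + 1) = eps by rewrite /d natr1 divfK // pnatr_eq0.
have [N hN] := @ev_all n (fun i k => `|inner (g k) (phi i)| < d) (fun i => st6 i d d0).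
apply: filterS (nbhs_infty_ge N) => k /hN hk.
rewrite ger0_norm //.
have [Vv nv maxv _ _] := HO k.
have c1 : r k <= `|g k| ^+ 2 *+ n.
  rewrite -[n]card_ord -sumr_const /r /OMP_residual; apply: ler_sum => i _.
  rewrite ler_sqr ?nnegrE //; apply: maxv.
    by apply: ls_sub; exists i.
  exact: (phi_norm _ _ _ H Hon).
have c2 : `|g k| ^+ 2 <= d *+ n.
  have [Wp Op] := projP omega k (v k.+1) H.
  have e : `|g k| ^+ 2 = inner (g k) (v k.+1).
    rewrite (ipN H) {2}/g (ipBr H) (ipS H (g k) (P k _)) (ipS H (g k)).
    by rewrite /g /P [X in _ - X](ipS H) (Op _ Wp) subr0.
  rewrite e; apply: le_trans (ler_norm _) _.
  apply: le_trans (unit_dual _ _ _ (g k) H Hon Vv nv) _.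
  rewrite -[n in _ *+ n]card_ord -sumr_const; apply: ler_sum => i _.
  exact: ltW.
have c3 : r k <= d *+ m by rewrite /m mulrnA; apply: le_trans c1 _; apply: ler_wMn2r.
rewrite -mulr_natr in c3.
have hm : 0 <= (m%:R : R) by [].
change (r k < eps).
nra.
Qed.
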